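(* Let $M$ be a finite regular cell complex with weights $w_\sigma>0$ on its cells, and let $\Delta=dd^*+d^*d$ be the Laplacian on $\Omega^*(M)=\bigoplus_d\Omega^d(M)$. Then $$\operatorname{Ker}(\Delta)\cong H^*(\Omega^*(M))\cong H^*(M;\mathbb{R}).$$
   Context: $C_*(M)$ is the real cellular chain complex of $M$ with boundary $\partial$ (cells oriented), with inner product $\langle\sigma,\sigma'\rangle=\delta_{\sigma,\sigma'}w_\sigma$. A combinatorial differential $d$-form is a linear map $\omega:C_*(M)\to C_*(M)$ with $\omega(C_p(M))\subset C_{p-d}(M)$ such that for each $p$-cell $\alpha$, $\omega(\alpha)$ is a linear combination of $(p-d)$-cells that are faces of $\alpha$; these form $\Omega^d(M)$. The differential $d:\Omega^d(M)\to\Omega^{d+1}(M)$ is $d\omega=\partial\circ\omega-(-1)^d\omega\circ\partial$; it satisfies $d^2=0$, and $H^*(\Omega^*(M))$ denotes the cohomology of the complex $(\Omega^*(M),d)$. $\Omega^*(M)$ carries the $L^2$ inner product $\langle u,v\rangle=\sum_\sigma\frac{1}{w_\sigma}\langle u(\sigma),v(\sigma)\rangle$ (forms of different degree orthogonal), and $d^*$ is the adjoint of $d$ with respect to it. *)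

(* Defs.v *)
From HB Require Import structures.
From mathcomp Require Import all_boot all_order all_algebra.
From mathcomp Require Import reals.
Set Implicit Arguments.
Unset Strict Implicit.
Unset Printing Implicit Defensive.
Import Order.TTheory GRing.Theory Num.Theory.
Local Open Scope ring_scope.

(* A finite cell complex M with n cells, the cells being indexed by 'I_n.
   - dim s    : the dimension of the cell s
   - inc s t  : the incidence number [s : t], so that  d s = sum_t [s:t] t
   - face s t : "t is a face of s" (reflexive: s is a face of itself)
   Chains are row vectors 'rV[R]_n (c 0 t = coefficient of the cell t),
   linear maps C_* -> C_* act on the right: c |-> c *m W, so that
   W s t is the coefficient of t in W(s). *)

Section CellComplex.
Variables (R : realType) (n : nat).
Variables (dim : 'I_n -> nat) (inc : 'I_n -> 'I_n -> int) (face : rel 'I_n).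

Definition bd : 'M[R]_n := \matrix_(s, t) (inc s t)%:~R.

Definition supported_on_faces (s : 'I_n) (k : nat) (c : 'rV[R]_n) :=
  forall t, c 0 t != 0 -> face s t && (dim t == k).

(* Regularity enters through: codimension-one faces have incidence +-1,
   the face poset is generated by codimension-one faces, and every closed
   cell (the subcomplex of the faces of a cell) is acyclic (augmented
   real cellular chain complex is exact), as closed cells are balls. *)
Record regular_cell_complex : Prop := {
  face_refl : forall s, face s s;
  face_anti : forall s t, face s t -> face t s -> s = t;
  face_trans : forall s t u, face s t -> face t u -> face s u;
  face_dim : forall s t, face s t -> (dim t <= dim s)%N;
  inc_values : forall s t, inc s t = 0 \/ inc s t = 1 \/ inc s t = -1;
  inc_face : forall s t, inc s t != 0 <-> (face s t /\ dim s = (dim t).+1);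
  face_covers : forall s t, face s t -> s <> t ->
      exists2 u, inc s u != 0 & face u t;
  bd_bd : forall s t, \sum_u inc s u * inc u t = 0;
  bd_aug : forall s, dim s = 1%N -> \sum_t inc s t = 0;
  closed_cell_acyclic : forall (s : 'I_n) (k : nat) (c : 'rV[R]_n),
      supported_on_faces s k c ->
      (if k is 0%N then \sum_t c 0 t == 0 else c *m bd == 0) ->
      exists2 b : 'rV[R]_n, supported_on_faces s k.+1 b & c = b *m bd
}.

Definition maxdeg : nat := (\max_(s : 'I_n) dim s).+1.

Definition degpart (k : nat) (W : 'M[R]_n) : 'M[R]_n :=
  \matrix_(s, t) (if dim s == (dim t + k)%N then W s t else 0).

Definition Omega (k : nat) : {vspace 'M[R]_n} :=
  (\sum_(s : 'I_n) \sum_(t : 'I_n | face s t && (dim s == dim t + k)%N)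
      <[delta_mx s t]>)%VS.

Definition Omega_all : {vspace 'M[R]_n} := (\sum_(k < maxdeg) Omega k)%VS.

(* d on Omega^k :  d w = bd o w - (-1)^k w o bd ;  extended to Omega^* *)
Definition dk (k : nat) (W : 'M[R]_n) : 'M[R]_n :=
  W *m bd - (-1) ^+ k *: (bd *m W).

Definition dform (W : 'M[R]_n) : 'M[R]_n :=
  \sum_(k < maxdeg) dk k (degpart k W).

Fact dform_linear : linear dform.
Proof.
move=> a A B; rewrite /dform scaler_sumr -big_split /=; apply: eq_bigr => k _.
have -> : degpart k (a *: A + B) = a *: degpart k A + degpart k B.
  by apply/matrixP => i j; rewrite !mxE; case: ifP => _; rewrite ?mulr0 ?addr0.
rewrite /dk mulmxDl mulmxDr -!scalemxAl -!scalemxAr.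
rewrite scalerDr scalerBr opprD addrACA; congr (_ + _).
by rewrite !scalerA mulrC.
Qed.

HB.instance Definition _ :=
  GRing.isLinear.Build R 'M[R]_n 'M[R]_n *:%R dform dform_linear.

Definition dlin : 'End('M[R]_n) := linfun dform.

Variable w : 'I_n -> R.

Definition chain_ip (c c' : 'rV[R]_n) : R := \sum_t c 0 t * c' 0 t * w t.

Definition form_ip_deg (U V : 'M[R]_n) : R :=
  \sum_s (w s)^-1 * chain_ip (row s U) (row s V).

(* on Omega^* : forms of different degrees are orthogonal *)
Definition form_ip (U V : 'M[R]_n) : R :=
  \sum_(k < maxdeg) form_ip_deg (degpart k U) (degpart k V).

Definition is_adjoint_of_d (dstar : 'M[R]_n -> 'M[R]_n) : Prop :=
  (forall V, V \in Omega_all -> dstar V \in Omega_all) /\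
  (forall U V, U \in Omega_all -> V \in Omega_all ->
     form_ip (dform U) V = form_ip U (dstar V)).

Definition laplacian (dstar : 'M[R]_n -> 'M[R]_n) (W : 'M[R]_n) : 'M[R]_n :=
  dform (dstar W) + dstar (dform W).

Definition Zform (k : nat) : {vspace 'M[R]_n} := (Omega k :&: lker dlin)%VS.
Definition Bform (k : nat) : {vspace 'M[R]_n} :=
  if k is k'.+1 then (dlin @: Omega k')%VS else 0%VS.
(* dimension of H^k(Omega^*(M)) = dim Z^k - dim B^k  (B^k <= Z^k) *)
Definition dim_H_Omega (k : nat) : nat := (\dim (Zform k) - \dim (Bform k))%N.

(* cochains = column vectors, phi s = value on s; coboundary
   (delta phi)(s) = phi(d s) = sum_t [s:t] phi(t), i.e. delta = bd *m _ *)
Definition Cochains (k : nat) : {vspace 'cV[R]_n} :=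
  (\sum_(s : 'I_n | dim s == k) <[delta_mx s ord0]>)%VS.
Definition coboundary : 'Hom('cV[R]_n, 'cV[R]_n) := linfun (mulmx bd).
Definition Zcell (k : nat) : {vspace 'cV[R]_n} :=
  (Cochains k :&: lker coboundary)%VS.
Definition Bcell (k : nat) : {vspace 'cV[R]_n} :=
  if k is k'.+1 then (coboundary @: Cochains k')%VS else 0%VS.
Definition dim_H_cell (k : nat) : nat := (\dim (Zcell k) - \dim (Bcell k))%N.

End CellComplex.

(* Main.v *)
Require Import Defs.
From HB Require Import structures.
From mathcomp Require Import all_boot all_order all_algebra.
From mathcomp Require Import reals.
From mathcomp Require Import zify.
Set Implicit Arguments.
Unset Strict Implicit.
Unset Printing Implicit Defensive.
Import Order.TTheory GRing.Theory Num.Theory.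
Local Open Scope ring_scope.

Definition maskmx (R : realType) (m p : nat) (P : 'I_m -> 'I_p -> bool)
  (A : 'M[R]_(m, p)) : 'M[R]_(m, p) :=
  \matrix_(i, j) (if P i j then A i j else 0).

Fact maskmx_linear (R : realType) m p P : linear (@maskmx R m p P).
Proof.
move=> a A B; apply/matrixP => i j; rewrite !mxE.
by case: ifP => _; rewrite ?mulr0 ?addr0.
Qed.

HB.instance Definition _ (R : realType) m p P :=
  GRing.isLinear.Build R 'M[R]_(m, p) 'M[R]_(m, p) *:%R (@maskmx R m p P)
    (@maskmx_linear R m p P).

Lemma mem_lker_mask (R : realType) m p P (A : 'M[R]_(m, p)) :
  (A \in lker (linfun (maskmx P))) <-> (forall i j, P i j -> A i j = 0).
Proof.
rewrite memv_ker lfunE /=; split.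
  by move=> /eqP /matrixP H i j Pij; have := H i j; rewrite !mxE Pij.
by move=> H; apply/eqP/matrixP => i j; rewrite !mxE; case: ifP => // /H ->.
Qed.

Definition linearize (R : realType) (n : nat) (f : 'M[R]_n -> 'M[R]_n)
  (A : 'M[R]_n) : 'M[R]_n := \sum_i \sum_j A i j *: f (delta_mx i j).

Fact linearize_linear (R : realType) n f : linear (@linearize R n f).
Proof.
move=> a A B; rewrite /linearize scaler_sumr -big_split /=.
apply: eq_bigr => i _; rewrite scaler_sumr -big_split /=.
by apply: eq_bigr => j _; rewrite !mxE scalerDl scalerA.
Qed.

HB.instance Definition _ (R : realType) n f :=
  GRing.isLinear.Build R 'M[R]_n 'M[R]_n *:%R (@linearize R n f)
    (@linearize_linear R n f).

Lemma linearizeE (R : realType) n (f : 'M[R]_n -> 'M[R]_n) :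
  (forall a A B, f (a *: A + B) = a *: f A + f B) -> forall A, linearize f A = f A.
Proof.
move=> Hf A.
have f0 : f 0 = 0.
  have := Hf 1 0 0; rewrite !scale1r addr0.
  by move/(congr1 (fun x => x - f 0)); rewrite subrr addrK => <-.
have fD : {morph f : x y / x + y}.
  by move=> x y; have := Hf 1 x y; rewrite !scale1r.
have fZ : forall a x, f (a *: x) = a *: f x.
  by move=> a x; have := Hf a x 0; rewrite !addr0 f0 addr0.
rewrite {2}(matrix_sum_delta A) (big_morph f fD f0).
apply: eq_bigr => i _; rewrite (big_morph f fD f0).
by apply: eq_bigr => j _; rewrite fZ.
Qed.

Definition epsf (R : realType) (n : nat) (dim : 'I_n -> nat) (W : 'M[R]_n) : 'cV[R]_n :=
  \col_s \sum_(t | dim t == 0%N) W s t.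

Fact epsf_linear (R : realType) n dim : linear (@epsf R n dim).
Proof.
move=> a A B; apply/matrixP => s j; rewrite !mxE mulr_sumr -big_split /=.
by apply: eq_bigr => t _; rewrite !mxE.
Qed.

HB.instance Definition _ (R : realType) n dim :=
  GRing.isLinear.Build R 'M[R]_n 'cV[R]_n *:%R (@epsf R n dim)
    (@epsf_linear R n dim).
Section Main.
Variables (R : realType) (n : nat) (dim : 'I_n -> nat)
  (inc : 'I_n -> 'I_n -> int) (face : rel 'I_n) (w : 'I_n -> R).
Hypothesis HM : regular_cell_complex R dim inc face.

Local Notation bdm := (bd R inc).
Local Notation MD := (maxdeg dim).

Definition okdeg (k : nat) (W : 'M[R]_n) :=
  forall s t, W s t != 0 -> face s t && (dim s == dim t + k)%N.
Definition okall (W : 'M[R]_n) :=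
  forall s t, W s t != 0 -> face s t && (dim t <= dim s)%N.

Lemma dim_lt_max s : (dim s < MD)%N.
Proof. by rewrite ltnS (leq_bigmax s). Qed.

Lemma okdeg_delta k s t a : face s t && (dim s == dim t + k)%N ->
  okdeg k (a *: delta_mx s t).
Proof.
move=> H i j; rewrite !mxE; case: (i =P s) => [->|]; case: (j =P t) => [->|] //=;
  by rewrite ?mulr0 ?eqxx.
Qed.

Lemma OmegaP k W : W \in Omega R dim face k <-> okdeg k W.
Proof.
split.
  have sub : (Omega R dim face k <= lker (linfun (maskmx
      (fun s t => ~~ (face s t && (dim s == dim t + k)%N)))))%VS.
    apply/subv_sumP => s _; apply/subv_sumP => t Pst; rewrite -memvE.
    apply/mem_lker_mask => i j; rewrite mxE.
    by case: (i =P s) => [->|]; case: (j =P t) => [->|] //=; rewrite Pst.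
  move=> /(subvP sub) /mem_lker_mask H s t; apply: contraR => /H ->.
  by rewrite eqxx.
move=> H; rewrite (matrix_sum_delta W); apply: memv_suml => s _.
apply: memv_suml => t _.
case: (W s t =P 0) => [->|/eqP Hst]; first by rewrite scale0r mem0v.
apply: memvZ; have Pst := H s t Hst.
apply: (subvP (sumv_sup s _ (sumv_sup t Pst (subvv _)))) => //.
exact: memv_line.
Qed.

Lemma okdeg_all k W : okdeg k W -> okall W.
Proof.
move=> H s t /H /andP[-> /eqP ->]; exact: leq_addr.
Qed.

Lemma OmegaAllP W : W \in Omega_all R dim face <-> okall W.
Proof.
split.
  have sub : (Omega_all R dim face <= lker (linfun (maskmx
      (fun s t => ~~ (face s t && (dim t <= dim s)%N)))))%VS.
    apply/subv_sumP => k _; apply/subvP => V /OmegaP /okdeg_all HV.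
    by apply/mem_lker_mask => i j; apply: contraNeq => /HV ->.
  move=> /(subvP sub) /mem_lker_mask H s t; apply: contraR => /H ->.
  by rewrite eqxx.
move=> H; rewrite (matrix_sum_delta W); apply: memv_suml => s _.
apply: memv_suml => t _.
case: (W s t =P 0) => [->|/eqP Hst]; first by rewrite scale0r mem0v.
have /andP[Fst Dst] := H s t Hst.
have lt : (dim s - dim t < MD)%N by rewrite (leq_ltn_trans (leq_subr _ _)) ?dim_lt_max.
apply: (subvP (sumv_sup (Ordinal lt) _ (subvv _))) => //=.
apply/OmegaP/okdeg_delta; rewrite Fst /= addnC subnK //.
Qed.

Lemma mulmx_neq0 m p q (A : 'M[R]_(m, p)) (B : 'M[R]_(p, q)) i j :
  (A *m B) i j != 0 -> exists l, A i l != 0 /\ B l j != 0.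
Proof.
have [l /andP[H1 H2]|H0] := pickP (fun l => (A i l != 0) && (B l j != 0)).
  by exists l.
rewrite mxE big1 ?eqxx // => l _; have := H0 l.
case: (A i l =P 0) => [->|_]; first by rewrite mul0r.
by move/negbT; rewrite /= negbK => /eqP ->; rewrite mulr0.
Qed.

Lemma bd_neq0 s t : bdm s t != 0 -> face s t /\ dim s = (dim t).+1.
Proof.
rewrite mxE intr_eq0 => H; exact/(inc_face HM).
Qed.

Lemma okdeg_mulbd k W s u : okdeg k W -> (W *m bdm) s u != 0 ->
  face s u && (dim s == dim u + k.+1)%N.
Proof.
move=> HW /mulmx_neq0 [t [/HW /andP[F1 /eqP D1] /bd_neq0 [F2 D2]]].
by rewrite (face_trans HM F1 F2) D1 D2 addSn addnS eqxx.
Qed.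

Lemma okdeg_bdmul k W s u : okdeg k W -> (bdm *m W) s u != 0 ->
  face s u && (dim s == dim u + k.+1)%N.
Proof.
move=> HW /mulmx_neq0 [t [/bd_neq0 [F1 D1] /HW /andP[F2 /eqP D2]]].
by rewrite (face_trans HM F1 F2) D1 D2 addnS eqxx.
Qed.

Lemma subZ_neq0 (A B : 'M[R]_n) (c : R) s u : (A - c *: B) s u != 0 ->
  A s u != 0 \/ B s u != 0.
Proof.
rewrite !mxE; case: (A s u =P 0) => [->|/eqP H]; last by left.
by rewrite sub0r oppr_eq0 mulf_eq0 negb_or => /andP[_ H]; right.
Qed.

Lemma okdeg_dk k W : okdeg k W -> okdeg k.+1 (dk inc k W).
Proof.
move=> HW s u /subZ_neq0 [H|H]; first exact: okdeg_mulbd H.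
exact: okdeg_bdmul H.
Qed.

Lemma okdeg_big k W : (MD <= k)%N -> okdeg k W -> W = 0.
Proof.
move=> Hk HW; apply/matrixP => s t; rewrite mxE.
apply/eqP; apply: contraT => /HW /andP[_ /eqP D].
have := dim_lt_max s; rewrite D => /(leq_trans (leq_addl _ _)) /(leq_trans Hk).
by rewrite ltnn.
Qed.

Lemma dk0 k : dk inc k (0 : 'M[R]_n) = 0.
Proof. by rewrite /dk mul0mx mulmx0 scaler0 subr0. Qed.

Lemma dformE k W : okdeg k W -> dform dim inc W = dk inc k W.
Proof.
move=> HW; case: (ltnP k MD) => Hk; last first.
  by rewrite (okdeg_big Hk HW) dk0 linear0.
rewrite /dform (bigD1 (Ordinal Hk)) //= big1 ?addr0.
  congr dk; apply/matrixP => s t; rewrite mxE.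
  case: ifP => // D; apply/esym/eqP; apply: contraFT D => /HW /andP[_ ->].
all: try done.
move=> i /eqP Hi; rewrite -[RHS](dk0 i); congr dk.
apply/matrixP => s t; rewrite !mxE; case: ifP => // /eqP D.
apply/eqP; apply: contraT => /HW /andP[_ /eqP D']; exfalso; apply: Hi; apply: val_inj => /=.
by move: D; rewrite D' => /eqP; rewrite eqn_add2l => /eqP.
Qed.


Local Notation eps := (epsf dim).

Lemma intr_sum (I : finType) (F : I -> int) :
  ((\sum_i F i)%:~R : R) = \sum_i (F i)%:~R.
Proof. exact: mulrz_sumr. Qed.

Lemma bdbd : bdm *m bdm = 0.
Proof.
apply/matrixP => s t; rewrite !mxE.
transitivity (((\sum_u inc s u * inc u t)%:~R) : R); last by rewrite (bd_bd HM).
rewrite intr_sum; apply: eq_bigr => u _; by rewrite !mxE intrM.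
Qed.

Lemma eps_mulbd W : eps (W *m bdm) = 0.
Proof.
apply/matrixP => s j; rewrite !mxE.
under eq_bigr do rewrite mxE.
rewrite exchange_big /= big1 // => u _.
rewrite -mulr_sumr.
suff -> : \sum_(t | dim t == 0%N) bdm u t = 0 by rewrite mulr0.
case: (dim u =P 1%N) => Du; last first.
  apply: big1 => t /eqP Dt; apply/eqP; apply: contraT => /bd_neq0 [_ D].
  by exfalso; apply: Du; rewrite D Dt.
rewrite big_mkcond /=.
transitivity (((\sum_t inc u t)%:~R) : R); last by rewrite (bd_aug HM).
rewrite intr_sum; apply: eq_bigr => t _; rewrite mxE.
case: ifP => [_|/negbT Dt]; first by rewrite ?mxE.
apply/esym/eqP; rewrite intr_eq0; apply: contraR Dt => /(inc_face HM) [_ D].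
by move: D; rewrite Du => -[<-].
Qed.

Lemma eps_bdmul W : eps (bdm *m W) = bdm *m eps W.
Proof.
apply/matrixP => s j; rewrite !mxE.
under eq_bigr do rewrite mxE.
rewrite exchange_big /=; apply: eq_bigr => u _.
by rewrite /epsf !mxE mulr_sumr.
Qed.

Lemma eps_dk k W : eps (dk inc k W) = - (-1) ^+ k *: (bdm *m eps W).
Proof.
by rewrite /dk linearB linearZ /= eps_mulbd eps_bdmul sub0r scaleNr.
Qed.

Definition okcoch (k : nat) (g : 'cV[R]_n) := forall s, g s ord0 != 0 -> dim s == k.

Lemma CochainsP k g : g \in Cochains R dim k <-> okcoch k g.
Proof.
split.
  have sub : (Cochains R dim k <= lker (linfun (maskmx
      (fun s (j : 'I_1) => ~~ (dim s == k)))))%VS.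
    apply/subv_sumP => s Ps; rewrite -memvE.
    apply/mem_lker_mask => i j; rewrite mxE.
    by case: (i =P s) => [->|]; rewrite ?Ps.
  move=> /(subvP sub) /mem_lker_mask H s; apply: contraR => /H ->.
  by rewrite eqxx.
move=> H; rewrite (matrix_sum_delta g); apply: memv_suml => s _.
rewrite big_ord1.
case: (g s ord0 =P 0) => [->|/eqP Hst]; first by rewrite scale0r mem0v.
apply: memvZ; have Ps := H s Hst.
apply: (subvP (sumv_sup s _ (subvv _))) => //.
exact: memv_line.
Qed.

Lemma okdeg_eps k W : okdeg k W -> okcoch k (eps W).
Proof.
move=> HW s; rewrite mxE; apply: contraR => /eqP Hs; apply/eqP.
apply: big1 => t /eqP Dt; apply/eqP; apply: contraT => /HW /andP[_ /eqP D].
by exfalso; apply: Hs; rewrite D Dt.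
Qed.

Lemma vertex_ex s : exists v, face s v /\ dim v = 0%N.
Proof.
suff H : forall m s, dim s = m -> exists v, face s v /\ dim v = 0%N by exact: H.
elim=> [|m IH] {}s Ds; first by exists s; split => //; exact: (face_refl HM).
pose c : 'rV[R]_n := delta_mx 0 s.
have c_s : c 0 s = 1 by rewrite mxE !eqxx.
have [u Hu|H0] := pickP (fun u => (c *m bdm) 0 u != 0).
  have [l [Hl /bd_neq0 [F1 D1]]] := mulmx_neq0 Hu.
  have ls : l = s by move: Hl; rewrite mxE; case: (l =P s) => //; rewrite andbF eqxx.
  subst l; have Du : dim u = m by move: D1; rewrite Ds => -[].
  have [v [F2 D2]] := IH u Du.
  by exists v; split => //; exact: (face_trans HM F1 F2).
have cb0 : c *m bdm == 0.
  apply/eqP/matrixP => i j; rewrite (ord1 i) [RHS]mxE; apply/eqP.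
  by move/negbT: (H0 j); rewrite negbK.
have supp : supported_on_faces dim face s m.+1 c.
  move=> t; rewrite mxE eqxx /=; have [->|ne] := eqVneq t s; last by rewrite eqxx.
  by rewrite (face_refl HM) Ds eqxx.
have [b Hb cb] := closed_cell_acyclic HM supp cb0.
have b0 : b = 0.
  apply/matrixP => i t; rewrite (ord1 i) mxE; apply/eqP; apply: contraT.
  move=> /Hb /andP[/(face_dim HM) Fd /eqP Dt]; move: Fd; rewrite Dt Ds.
  by rewrite ltnn.
by move: c_s; rewrite cb b0 mul0mx mxE => /eqP; rewrite eq_sym oner_eq0.
Qed.

Lemma lift_coch j g : okcoch j g -> exists V, okdeg j V /\ eps V = g.
Proof.
move=> Hg; have [vx Hvx] := fin_all_exists vertex_ex.
exists (\matrix_(s, t) if t == vx s then g s ord0 else 0); split.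
  move=> s t; rewrite mxE; case: (t =P vx s) => [->|] //; last by rewrite eqxx.
  move=> /Hg /eqP Ds; have [F D] := Hvx s; by rewrite F D Ds add0n eqxx.
apply/matrixP => s i; rewrite (ord1 i) !mxE.
rewrite (bigD1 (vx s)) ?(proj2 (Hvx s)) //= mxE eqxx big1 ?addr0 //.
by move=> t /andP[_ /negbTE Ht]; rewrite mxE Ht.
Qed.

Definition okdegm (j : nat) (U : 'M[R]_n) :=
  forall s t, U s t != 0 -> face s t && (dim s + 1 == dim t + j)%N.

Lemma mulmx_eq0 m p q (A : 'M[R]_(m, p)) (B : 'M[R]_(p, q)) i j :
  (forall l, A i l != 0 -> B l j != 0 -> False) -> (A *m B) i j = 0.
Proof.
move=> H; apply/eqP; apply: contraT => /mulmx_neq0 [l [H1 H2]].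
by case: (H l H1 H2).
Qed.

Lemma okdegm_mulbd j U s u : okdegm j U -> (U *m bdm) s u != 0 ->
  face s u && (dim s == dim u + j)%N.
Proof.
move=> HU /mulmx_neq0 [t [/HU /andP[F1 /eqP D1] /bd_neq0 [F2 D2]]].
rewrite (face_trans HM F1 F2) /=; apply/eqP; lia.
Qed.

Lemma okdegm_bdmul j U s u : okdegm j U -> (bdm *m U) s u != 0 ->
  face s u && (dim s == dim u + j)%N.
Proof.
move=> HU /mulmx_neq0 [t [/bd_neq0 [F1 D1] /HU /andP[F2 /eqP D2]]].
rewrite (face_trans HM F1 F2) /=; apply/eqP; lia.
Qed.

Lemma okdegmD j U V : okdegm j U -> okdegm j V -> okdegm j (U + V).
Proof.
move=> HU HV s t; rewrite mxE; case: (U s t =P 0) => [->|/eqP H _]; last exact: HU H.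
by rewrite add0r => /HV.
Qed.

Lemma entry_comb (A B C : 'M[R]_n) (c : R) s u :
  (A - (B + c *: C)) s u = A s u - (B s u + c * C s u).
Proof. by rewrite !mxE. Qed.

Lemma dk_closed j U : dk inc j (U *m bdm + (-1) ^+ j *: (bdm *m U)) = 0.
Proof.
rewrite /dk mulmxDl mulmxDr -[U *m bdm *m bdm]mulmxA bdbd mulmx0 add0r.
rewrite -!scalemxAl -scalemxAr !mulmxA bdbd mul0mx scaler0 addr0.
by rewrite subrr.
Qed.

Lemma dkB j (A B : 'M[R]_n) : dk inc j (A - B) = dk inc j A - dk inc j B.
Proof.
rewrite /dk mulmxBl mulmxBr scalerBr !opprB addrACA [RHS]addrACA.
congr (_ + _); exact: addrC.
Qed.

Lemma cyc_cond j q W s : okdeg j W -> dk inc j W = 0 ->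
  (q = 0%N -> eps W = 0) -> (forall s u, (dim u < q)%N -> W s u = 0) ->
  let c := \row_t (if dim t == q then W s t else 0) in
  if q is 0 then \sum_t c 0 t == 0 else c *m bdm == 0.
Proof.
move=> HW HdW; case: q => [|q] He Hlow /=.
  under eq_bigr do rewrite mxE.
  rewrite -big_mkcond /=.
  by have := He erefl => /matrixP /(_ s ord0); rewrite !mxE => ->.
apply/eqP/matrixP => i u; rewrite (ord1 i) [RHS]mxE mxE.
under eq_bigr do rewrite mxE.
case: (dim u =P q) => Du; last first.
  apply: big1 => t _; case: ifP => [/eqP Dt|_]; last by rewrite mul0r.
  apply/eqP; apply: contraT; rewrite mulf_eq0 negb_or => /andP[_ /bd_neq0 [_ D]].
  by exfalso; apply: Du; lia.
have bW : (bdm *m W) s u = 0.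
  by apply: mulmx_eq0 => l _; rewrite Hlow ?eqxx // Du.
have Wb : (W *m bdm) s u = 0.
  rewrite mxE in bW; move/matrixP: HdW => /(_ s u); rewrite /dk !mxE.
  by rewrite bW mulr0 subr0.
transitivity ((W *m bdm) s u); last exact: Wb.
rewrite mxE; apply: eq_bigr => t _; case: ifP => // /eqP Dt.
rewrite mul0r; apply/esym/eqP; rewrite mulf_eq0; apply: contraT.
rewrite negb_or => /andP[_ /bd_neq0 [_ D]]; by exfalso; apply: Dt; lia.
Qed.

Lemma stair j m : forall q W, (MD <= q + m)%N -> okdeg j W -> dk inc j W = 0 ->
  (q = 0%N -> eps W = 0) -> (forall s u, (dim u < q)%N -> W s u = 0) ->
  exists U, okdegm j U /\ eps U = 0 /\ W = U *m bdm + (-1) ^+ j *: (bdm *m U).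
Proof.
elim: m => [|m IH] q W Hq HW HdW He Hlow.
  have -> : W = 0.
    apply/matrixP => s u; rewrite mxE; apply: Hlow.
    by apply: leq_trans (dim_lt_max u) _; rewrite addn0 in Hq.
  exists 0; split; first by move=> s t; rewrite mxE eqxx.
  by split; [exact: linear0 | rewrite mul0mx mulmx0 scaler0 addr0].
have Hc : forall s, exists b : 'rV[R]_n, supported_on_faces dim face s q.+1 b /\
    \row_t (if dim t == q then W s t else 0) = b *m bdm.
  move=> s; have supp : supported_on_faces dim face s q
      (\row_t (if dim t == q then W s t else 0)).
    move=> t; rewrite mxE; case: ifP => Dt; last by rewrite eqxx.
    by move=> /HW /andP[-> _].
  have [b Hb Eb] := closed_cell_acyclic HM supp (cyc_cond s HW HdW He Hlow).
  by exists b.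
have [bf Hbf] := fin_all_exists Hc.
pose U := \matrix_(s, t) if dim s == (q + j)%N then bf s 0 t else 0.
have HU : okdegm j U.
  move=> s t; rewrite mxE; case: ifP => [/eqP Ds|]; last by rewrite eqxx.
  move=> /(proj1 (Hbf s)) /andP[-> /eqP Dt]; apply/eqP; lia.
have eU : eps U = 0.
  apply/matrixP => s i; rewrite !mxE; apply: big1 => t /eqP Dt.
  rewrite ?mxE; case: ifP => // _; apply/eqP; apply: contraT.
  by move=> /(proj1 (Hbf s)) /andP[_ /eqP D]; rewrite Dt in D.
have rowUbd : forall s u, dim u = q -> (U *m bdm) s u = W s u.
  move=> s u Du; rewrite mxE.
  case: (dim s =P (q + j)%N) => Ds.
    under eq_bigr do rewrite mxE Ds eqxx.
    have := congr1 (fun M : 'M[R]_(1, n) => M 0 u) (proj2 (Hbf s)); rewrite /= !mxE Du eqxx.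
    by move=> ->.
  rewrite big1; last by move=> t _; rewrite mxE; move/eqP/negbTE: Ds => ->; rewrite mul0r.
  apply/esym/eqP; apply: contraT => /HW /andP[_ /eqP D]; exfalso; apply: Ds; lia.
have Ut : forall s t, U s t != 0 -> dim t = q.+1.
  move=> s t; rewrite mxE; case: ifP => _; last by rewrite eqxx.
  by move=> /(proj1 (Hbf s)) /andP[_ /eqP].
have lowUbd : forall s u, (dim u < q)%N -> (U *m bdm) s u = 0.
  by move=> s u Du; apply: mulmx_eq0 => t /Ut D1 /bd_neq0 [_ D2]; lia.
have lowbdU : forall s u, (dim u <= q)%N -> (bdm *m U) s u = 0.
  by move=> s u Du; apply: mulmx_eq0 => t _ /Ut D; lia.
pose W' := W - (U *m bdm + (-1) ^+ j *: (bdm *m U)).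
have HW' : okdeg j W'.
  apply/OmegaP; apply: rpredB; first exact/OmegaP.
  apply: rpredD; last apply: rpredZ; apply/OmegaP => s u;
    [exact: okdegm_mulbd | exact: okdegm_bdmul].
have HdW' : dk inc j W' = 0 by rewrite dkB HdW dk_closed subrr.
have Hlow' : forall s u, (dim u < q.+1)%N -> W' s u = 0.
  move=> s u; rewrite ltnS leq_eqVlt => /orP[/eqP Du|Du]; rewrite entry_comb.
    by rewrite rowUbd // lowbdU ?Du // mulr0 addr0 subrr.
  by rewrite Hlow // lowUbd // lowbdU ?(ltnW Du) // mulr0 addr0 subrr.
have He' : q.+1 = 0%N -> eps W' = 0 by [].
have Hq' : (MD <= q.+1 + m)%N by rewrite addSnnS.
have [U' [HU' [eU' EW']]] := IH q.+1 W' Hq' HW' HdW' He' Hlow'.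
exists (U + U'); split; first exact: okdegmD.
split; first by rewrite linearD /= eU eU' addr0.
have -> : W = W' + (U *m bdm + (-1) ^+ j *: (bdm *m U)) by rewrite /W' subrK.
rewrite EW' mulmxDl mulmxDr scalerDr addrACA; congr (_ + _); exact: addrC.
Qed.

Hypothesis wpos : forall s, 0 < w s.
Local Notation fip := (form_ip dim w).

Lemma form_ipE (U V : 'M[R]_n) : fip U V = \sum_(k < MD) \sum_s \sum_t
  (w s)^-1 * ((if dim s == (dim t + k)%N then U s t * V s t else 0) * w t).
Proof.
apply: eq_bigr => k _; apply: eq_bigr => s _; rewrite /chain_ip mulr_sumr.
apply: eq_bigr => t _; rewrite !mxE; case: ifP => _ //.
by rewrite mul0r.
Qed.

Lemma fip_cong (A B C D : 'M[R]_n) : (forall s t, A s t * B s t = C s t * D s t) ->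
  fip A B = fip C D.
Proof.
move=> H; rewrite !form_ipE; apply: eq_bigr => k _; apply: eq_bigr => s _.
by apply: eq_bigr => t _; rewrite H.
Qed.

Lemma fip_sym (A B : 'M[R]_n) : fip A B = fip B A.
Proof. by apply: fip_cong => s t; rewrite mulrC. Qed.

Lemma fip_lin (U : 'M[R]_n) a (X Y : 'M[R]_n) : fip U (a *: X + Y) = a * fip U X + fip U Y.
Proof.
rewrite !form_ipE mulr_sumr -big_split; apply: eq_bigr => k _ /=.
rewrite mulr_sumr -big_split; apply: eq_bigr => s _ /=.
rewrite mulr_sumr -big_split; apply: eq_bigr => t _ /=.
rewrite !mxE; case: ifP => _; last by rewrite !mul0r !mulr0 addr0.
by rewrite mulrDr mulrDl mulrDr !mulrA [a * _]mulrC -!mulrA [a * (_ * _)]mulrCA.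
Qed.

Lemma fip0r (U : 'M[R]_n) : fip U 0 = 0.
Proof.
rewrite form_ipE; apply: big1 => k _; apply: big1 => s _; apply: big1 => t _.
by rewrite mxE mulr0 if_same mul0r mulr0.
Qed.

Lemma fip0l (U : 'M[R]_n) : fip 0 U = 0.
Proof. by rewrite fip_sym fip0r. Qed.

Lemma fipD (U X Y : 'M[R]_n) : fip U (X + Y) = fip U X + fip U Y.
Proof. by have := fip_lin U 1 X Y; rewrite scale1r mul1r. Qed.

Lemma fipB (U X Y : 'M[R]_n) : fip U (X - Y) = fip U X - fip U Y.
Proof. by rewrite addrC -scaleN1r fip_lin mulN1r addrC. Qed.

Lemma fipDl (U X Y : 'M[R]_n) : fip (X + Y) U = fip X U + fip Y U.
Proof. by rewrite fip_sym fipD ![fip U _]fip_sym. Qed.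

Lemma fip_term_ge0 (U : 'M[R]_n) s t k :
  0 <= (w s)^-1 * ((if dim s == (dim t + k)%N then U s t * U s t else 0) * w t).
Proof.
apply: mulr_ge0; first by rewrite invr_ge0 ltW.
apply: mulr_ge0; last exact: ltW.
by case: ifP => _ //; rewrite -expr2 sqr_ge0.
Qed.

Lemma fip_ge0 (U : 'M[R]_n) : 0 <= fip U U.
Proof.
rewrite form_ipE; apply: sumr_ge0 => k _; apply: sumr_ge0 => s _.
apply: sumr_ge0 => t _; exact: fip_term_ge0.
Qed.

Lemma fip_eq0 (U : 'M[R]_n) : okall U -> fip U U = 0 -> U = 0.
Proof.
move=> HU; rewrite form_ipE => H0.
have H1 := psumr_eq0P (fun (k : 'I_MD) _ => sumr_ge0 _ (fun (s : 'I_n) _ => sumr_ge0 _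
   (fun (t : 'I_n) _ => fip_term_ge0 U s t k))) H0.
apply/matrixP => s t; rewrite mxE; apply/eqP; apply: contraT => Hst.
have /andP[_ Dst] := HU s t Hst.
have lt : (dim s - dim t < MD)%N by rewrite (leq_ltn_trans (leq_subr _ _)) ?dim_lt_max.
have H2 := psumr_eq0P (fun (s : 'I_n) _ => sumr_ge0 _ (fun (t : 'I_n) _ => fip_term_ge0 U s t (Ordinal lt)))
   (@H1 (Ordinal lt) isT).
have H3 := @psumr_eq0P _ _ _ _ (fun (t : 'I_n) _ => fip_term_ge0 U s t (Ordinal lt)) (@H2 s isT) t isT.
move: H3 => /= /eqP; rewrite addnC subnK // eqxx mulf_eq0 invr_eq0 mulf_eq0.
by rewrite !(gt_eqF (wpos _)) /= orbF mulf_eq0 orbb (negbTE Hst).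
Qed.

Variable dstar : 'M[R]_n -> 'M[R]_n.
Hypothesis Hadj : is_adjoint_of_d dim inc face w dstar.

Local Notation OA := (Omega_all R dim face).

Lemma ds_lin a (V1 V2 : 'M[R]_n) : V1 \in OA -> V2 \in OA ->
  dstar (a *: V1 + V2) = a *: dstar V1 + dstar V2.
Proof.
case: Hadj => Hcl Had HV1 HV2.
have HV : a *: V1 + V2 \in OA by rewrite rpredD // rpredZ.
pose X := dstar (a *: V1 + V2) - (a *: dstar V1 + dstar V2).
have HX : X \in OA by rewrite rpredB ?rpredD ?rpredZ // Hcl.
have : fip X X = 0.
  by rewrite {2}/X fipB fip_lin -!Had // fip_lin subrr.
move/(fip_eq0 (proj1 (OmegaAllP X) HX)) => /eqP; rewrite subr_eq0 => /eqP.
by [].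
Qed.

Lemma ds0 : dstar 0 = 0.
Proof.
have := ds_lin 1 (mem0v OA) (mem0v OA); rewrite !scale1r addr0.
by move/(congr1 (fun x => x - dstar 0)); rewrite subrr addrK => <-.
Qed.

Definition Pall s t := face s t && (dim t <= dim s)%N.
Definition gds (W : 'M[R]_n) := dstar (maskmx Pall W).

Lemma mask_all W : maskmx Pall W \in OA.
Proof.
apply/OmegaAllP => s t; rewrite mxE; case: ifP => //; by rewrite eqxx.
Qed.

Lemma mask_id W : okall W -> maskmx Pall W = W.
Proof.
move=> HW; apply/matrixP => s t; rewrite mxE; case: ifP => // H.
by apply/esym/eqP; apply: contraFT H => /HW.
Qed.

Lemma gds_lin a (A B : 'M[R]_n) : gds (a *: A + B) = a *: gds A + gds B.
Proof. by rewrite /gds linearP /= ds_lin ?mask_all. Qed.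

Definition Ds : 'End('M[R]_n) := linfun (linearize gds).

Lemma DsE W : W \in OA -> Ds W = dstar W.
Proof.
move=> /OmegaAllP HW; rewrite lfunE /= linearizeE; last exact: gds_lin.
by rewrite /gds mask_id.
Qed.

Lemma ds_deg k V : okdeg k V -> okdegm k (dstar V).
Proof.
case: Hadj => Hcl Had HV.
have VO : V \in OA by apply/OmegaAllP; exact: (okdeg_all HV).
have XO := Hcl V VO.
pose X := dstar V.
pose Y := maskmx (fun s t => ~~ (dim s + 1 == dim t + k)%N) X.
have YO : Y \in OA.
  apply/OmegaAllP => s t; rewrite mxE; case: ifP => _; last by rewrite eqxx.
  by apply: (proj1 (OmegaAllP X) XO).
have : fip Y Y = 0.
  transitivity (fip Y X).
    by apply: fip_cong => s t; rewrite mxE; case: ifP => _; rewrite ?mul0r.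
  rewrite /X -Had //.
  rewrite -(fip0l V); apply: fip_cong => s t; rewrite mxE mul0r.
  case: (V s t =P 0) => [->|/eqP Vst]; first by rewrite mulr0.
  have /andP[_ /eqP D] := HV s t Vst.
  rewrite summxE big1 ?mul0r // => k' _.
  case: (k'.+1 =P k) => Hk.
    suff -> : degpart dim k' Y = 0 by rewrite dk0 mxE.
    apply/matrixP => i j; rewrite !mxE; case: ifP => // /eqP Dij.
    by rewrite Dij -Hk addn1 addnS eqxx.
  have Hdp : okdeg k' (degpart dim k' Y).
    move=> i j; rewrite mxE; case: ifP => Dij; last by rewrite eqxx.
    by move=> /(proj1 (OmegaAllP Y) YO) /andP[-> _].
  apply/eqP; apply: contraT => /(okdeg_dk Hdp) /andP[_ /eqP D'].
  by exfalso; apply: Hk; lia.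
move/(fip_eq0 (proj1 (OmegaAllP Y) YO)) => Y0.
move=> s t Hst; have /andP[-> _] := proj1 (OmegaAllP X) XO s t Hst.
apply: contraT => Hn; move/matrixP: Y0 => /(_ s t); rewrite !mxE Hn => E.
by move: Hst; rewrite /X E eqxx.
Qed.

Local Notation Zf k := (Zform R dim inc face k).
Local Notation Bf k := (Bform R dim inc face k).
Local Notation dl := (dlin R dim inc).

Lemma memZ k (W : 'M[R]_n) : W \in Zf k <-> okdeg k W /\ dk inc k W = 0.
Proof.
rewrite /Zform memv_cap memv_ker /dlin lfunE /=; split.
  by move=> /andP[/OmegaP H /eqP]; rewrite (dformE H) => ->.
by move=> [H E]; rewrite (proj2 (OmegaP k W) H) /= (dformE H) E.
Qed.

Lemma memB k (W : 'M[R]_n) : W \in Bf k.+1 <-> exists U, okdeg k U /\ W = dk inc k U.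
Proof.
rewrite /Bform; split.
  by move/memv_imgP => [U /OmegaP HU ->]; exists U; rewrite /dlin lfunE /= (dformE HU).
move=> [U [HU ->]]; have := memv_img dl (proj2 (OmegaP k U) HU).
by rewrite /dlin lfunE /= (dformE HU).
Qed.

Lemma dk_alt k (U : 'M[R]_n) : dk inc k U = U *m bdm + (-1) ^+ k.+1 *: (bdm *m U).
Proof. by rewrite /dk exprS mulN1r scaleNr. Qed.

Lemma dk_dk k (U : 'M[R]_n) : dk inc k.+1 (dk inc k U) = 0.
Proof. by rewrite [dk inc k U]dk_alt dk_closed. Qed.

Lemma B_sub_Z k : (Bf k <= Zf k)%VS.
Proof.
case: k => [|k]; first exact: sub0v.
apply/subvP => W /memB [U [HU ->]]; apply/memZ; split; first exact: okdeg_dk.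
exact: dk_dk.
Qed.

Lemma okdegm_0 (U : 'M[R]_n) : okdegm 0 U -> U = 0.
Proof.
move=> HU; apply/matrixP => s t; rewrite mxE; apply/eqP; apply: contraT.
move=> /HU /andP[/(face_dim HM) F /eqP D]; exfalso; lia.
Qed.

Lemma okdegm_S k (U : 'M[R]_n) : okdegm k.+1 U -> okdeg k U.
Proof.
by move=> HU s t /HU /andP[-> /eqP D]; apply/eqP; lia.
Qed.

Lemma okdeg_OA k (W : 'M[R]_n) : okdeg k W -> W \in OA.
Proof. by move=> H; apply/OmegaAllP; exact: (okdeg_all H). Qed.

Definition Kv k := (Zf k :&: lker Ds)%VS.

Lemma Kv_mem k (W : 'M[R]_n) : (W \in Kv k) =
  (W \in Omega R dim face k) && (laplacian dim inc dstar W == 0).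
Proof.
rewrite /Kv /Zform !memv_cap.
case HW: (W \in Omega R dim face k) => //=.
have HWd := proj1 (OmegaP k W) HW.
have WO := okdeg_OA HWd.
have dWO := okdeg_OA (okdeg_dk HWd).
rewrite !memv_ker /dlin lfunE /= DsE // /laplacian (dformE HWd).
case: Hadj => Hcl Had.
apply/andP/eqP => [[/eqP d0 /eqP s0]|L0].
  by rewrite s0 d0 linear0 ds0 addr0.
have E : fip (dstar W) (dstar W) + fip (dk inc k W) (dk inc k W) = 0.
  rewrite -(Had _ _ (Hcl W WO) WO) -{1}(dformE HWd) (Had _ _ WO dWO).
  by rewrite fip_sym -fipD L0 fip0r.
move/eqP: E; rewrite paddr_eq0 ?fip_ge0 // => /andP[/eqP E1 /eqP E2].
split; apply/eqP.
  exact: (fip_eq0 (proj1 (OmegaAllP _) dWO) E2).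
exact: (fip_eq0 (proj1 (OmegaAllP _) (Hcl W WO)) E1).
Qed.

Lemma dimK k : \dim (Kv k) = (\dim (Zf k) - \dim (Bf k))%N.
Proof.
case: Hadj => Hcl Had.
have KB0 : (Kv k :&: Bf k = 0)%VS.
  apply/eqP; rewrite -subv0; apply/subvP => W; rewrite memv_cap memv0.
  move=> /andP[HK HB].
  case: k HK HB => [|k] HK HB; first by rewrite /Bform memv0 in HB.
  move: HB => /memB [U [HU EW]].
  move: HK; rewrite /Kv memv_cap => /andP[/memZ [HW _]]; rewrite memv_ker.
  have WO := okdeg_OA HW.
  rewrite DsE // => /eqP sW.
  apply/eqP; apply: (fip_eq0 (proj1 (OmegaAllP _) WO)).
  by rewrite {1}EW -(dformE HU) Had ?sW ?fip0r // (okdeg_OA HU).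
have le1 : (\dim (Kv k) + \dim (Bf k) <= \dim (Zf k))%N.
  rewrite -dimv_sum_cap KB0 dimv0 addn0; apply: dimvS.
  by rewrite subv_add capvSl B_sub_Z.
have le2 : (\dim (Zf k) <= \dim (Kv k) + \dim (Bf k))%N.
  rewrite -(limg_ker_dim Ds (Zf k)) leq_add2l.
  rewrite -(limg_ker_dim dl (Ds @: Zf k)).
  have -> : (Ds @: Zf k :&: lker dl = 0)%VS.
    apply/eqP; rewrite -subv0; apply/subvP => X; rewrite memv_cap memv0.
    move=> /andP[/memv_imgP [W /memZ [HW _] ->]].
    have WO := okdeg_OA HW.
    rewrite memv_ker /dlin lfunE /= DsE // => /eqP d0.
    have XO := Hcl W WO.
    apply/eqP; apply: (fip_eq0 (proj1 (OmegaAllP _) XO)).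
    by rewrite -{2}[dstar W]/(dstar W) -Had // d0 fip_sym fip0r.
  rewrite dimv0 add0n; apply: dimvS; apply/subvP => Y.
  move=> /memv_imgP [X /memv_imgP [W /memZ [HW _] ->] ->].
  have WO := okdeg_OA HW.
  rewrite DsE //; have HX := ds_deg HW.
  case: k HW HX {le1 KB0} => [|k] HW HX.
    by rewrite (okdegm_0 HX) linear0 mem0v.
  apply/memB; exists (dstar W); split; first exact: okdegm_S.
  by rewrite /dlin lfunE /= (dformE (okdegm_S HX)).
lia.
Qed.

Definition Ev : 'Hom('M[R]_n, 'cV[R]_n) := linfun (epsf dim).

Lemma Hlow0 (W : 'M[R]_n) : forall s u, (dim u < 0)%N -> W s u = 0.
Proof. by []. Qed.

Lemma MD0 : (MD <= 0 + MD)%N.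
Proof. by rewrite add0n. Qed.

Lemma kerZB k : (Zf k :&: lker Ev = Bf k :&: lker Ev)%VS.
Proof.
apply/eqP; rewrite eqEsubv [X in _ && X]capvS ?B_sub_Z ?subvv // andbT.
apply/subvP => W HW'; rewrite memv_cap; move: HW'; rewrite memv_cap => /andP[/memZ [HW dW] HE]; rewrite HE andbT.
move: HE; rewrite memv_ker lfunE /= => /eqP HE.
have [U [HU [_ EW]]] := @stair k MD 0 W MD0 HW dW (fun _ => HE) (Hlow0 W).
case: k HW dW HU EW => [|k] HW dW HU EW.
  by rewrite (okdegm_0 HU) mul0mx mulmx0 scaler0 addr0 in EW; rewrite EW mem0v.
apply/memB; exists U; split; first exact: okdegm_S.
by rewrite EW dk_alt.
Qed.

Lemma imgZ k : (Ev @: Zf k = Zcell R dim inc k)%VS.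
Proof.
apply/eqP; rewrite eqEsubv; apply/andP; split; apply/subvP => g.
  move/memv_imgP => [W /memZ [HW dW] ->]; rewrite lfunE /=.
  rewrite /Zcell memv_cap; apply/andP; split; first exact/CochainsP/okdeg_eps.
  rewrite memv_ker /coboundary lfunE /=.
  have := eps_dk k W; rewrite dW linear0 => /esym/eqP.
  by rewrite scaler_eq0 oppr_eq0 signr_eq0.
rewrite /Zcell memv_cap => /andP[/CochainsP Hg].
rewrite memv_ker /coboundary lfunE /= => /eqP bg.
have [V [HV eV]] := lift_coch Hg.
have HW := okdeg_dk HV.
have dW := dk_dk k V.
have eW : eps (dk inc k V) = 0 by rewrite eps_dk eV bg scaler0.
have [U [HU [eU EW]]] := @stair k.+1 MD 0 _ MD0 HW dW (fun _ => eW) (Hlow0 _).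
have HU' := okdegm_S HU.
apply/memv_imgP; exists (V - U).
  apply/memZ; split.
    by apply/OmegaP; rewrite rpredB //; exact/OmegaP.
  by rewrite dkB EW -dk_alt subrr.
by rewrite lfunE /= linearB /= eV eU subr0.
Qed.

Lemma imgB k : (Ev @: Bf k = Bcell R dim inc k)%VS.
Proof.
case: k => [|k]; first by rewrite /Bform /Bcell limg0.
apply/eqP; rewrite eqEsubv; apply/andP; split; apply/subvP => g.
  move/memv_imgP => [W /memB [U [HU ->]] ->]; rewrite lfunE /= eps_dk.
  have -> : bdm *m eps U = coboundary R inc (eps U) by rewrite /coboundary lfunE.
  apply: memvZ; apply: memv_img; exact/CochainsP/okdeg_eps.
rewrite /Bcell => /memv_imgP [h /CochainsP Hh ->]; rewrite /coboundary lfunE /=.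
have [V [HV eV]] := lift_coch Hh.
pose c : R := - (-1) ^+ k.
have cc : c * c = 1.
  by rewrite /c mulrNN -expr2 -exprM mulnC exprM sqrrN !expr1n.
apply/memv_imgP; exists (dk inc k (c *: V)).
  apply/memB; exists (c *: V); split => //.
  by apply/OmegaP; apply: rpredZ; exact/OmegaP.
by rewrite lfunE /= eps_dk linearZ /= eV -scalemxAr scalerA cc scale1r.
Qed.

Lemma main k : exists K : {vspace 'M[R]_n},
      (forall W, (W \in K) =
           (W \in Omega R dim face k) && (laplacian dim inc dstar W == 0)) /\
      \dim K = dim_H_Omega R dim inc face k /\
      dim_H_Omega R dim inc face k = dim_H_cell R dim inc k.
Proof.
exists (Kv k); split; first exact: Kv_mem.
split; first exact: dimK.
rewrite /dim_H_Omega /dim_H_cell -imgZ -imgB.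
have e1 := limg_ker_dim Ev (Zf k).
have e2 := limg_ker_dim Ev (Bf k).
rewrite kerZB in e1; by rewrite -e1 -e2 subnDl.
Qed.
End Main.

Theorem theorem2p6 (R : realType) (n : nat) (dim : 'I_n -> nat)
    (inc : 'I_n -> 'I_n -> int) (face : rel 'I_n) (w : 'I_n -> R)
    (dstar : 'M[R]_n -> 'M[R]_n) :
  regular_cell_complex R dim inc face ->
  (forall s, 0 < w s) ->
  is_adjoint_of_d dim inc face w dstar ->
  forall k : nat,
    exists K : {vspace 'M[R]_n},
      (forall W, (W \in K) =
           (W \in Omega R dim face k) && (laplacian dim inc dstar W == 0)) /\
      \dim K = dim_H_Omega R dim inc face k /\
      dim_H_Omega R dim inc face k = dim_H_cell R dim inc k.
Proof.
move=> HM wpos Hadj k.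
exact: (main HM wpos Hadj k).
Qed.
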